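(* ($I\Sigma_1$) Let $X\subseteq\mathbb{N}$ be finite, $\omega^{n+3}$-large and $\omega^3$-sparse, and let $c\in\mathbb{N}$ with $c\le\min X$. Then $X$ admits an $(\omega^n,c)$-grouping for $\min X$ colors.
   Context: $\alpha$-largeness for $\alpha<\omega^\omega$: writing ordinals in Cantor normal form, $0[m]=0$, $(\beta+1)[m]=\beta$, $(\beta+\omega^n)[m]=\beta+\omega^{n-1}\cdot m$ for $n\ge1$; a finite $\{x_0<\dots<x_{\ell-1}\}$ is $\alpha$-large if $\alpha[x_0]\cdots[x_{\ell-1}]=0$ (so for a natural number $c$, $c$-large means having at least $c$ elements). $X$ is \emph{$\alpha$-sparse} if $\min X>3$ and for all $x<y$ in $X$ the interval $[x,y)$ is $\alpha$-large. For $P:[X]^2\to\{0,\dots,\min X-1\}$, a finite sequence $\langle F_i\subseteq X:i<l\rangle$ is an \emph{$(\alpha,\beta)$-grouping for $P$} if $\max F_i<\min F_j$ for $i<j$, each $F_i$ is $\alpha$-large, $\{\max F_i:i<l\}$ is $\beta$-large, and $P(x,y)=P(x',y')$ whenever $i<j<l$, $x,x'\in F_i$, $y,y'\in F_j$. $X$ \emph{admits an $(\alpha,\beta)$-grouping for $k$ colors} if every $P:[X]^2\to\{0,\dots,k-1\}$ has one. *)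

(* Defs.v *)
From mathcomp Require Import all_boot.
Set Implicit Arguments. Unset Strict Implicit. Unset Printing Implicit Defensive.

(* Ordinals below omega^omega in Cantor normal form
     alpha = omega^(e_k) + ... + omega^(e_1),  e_k >= ... >= e_1,
   are represented by the list of exponents in REVERSED order
   [:: e_1; ...; e_k] (smallest, i.e. last CNF term, first). *)
Definition cnf := seq nat.

Definition cnf_zero : cnf := [::].
Definition omega_pow (n : nat) : cnf := [:: n].
Definition nat_cnf (c : nat) : cnf := nseq c 0.

(* Fundamental sequence:
   0[m] = 0, (beta+1)[m] = beta, (beta + omega^(n+1))[m] = beta + omega^n * m. *)
Definition fund (a : cnf) (m : nat) : cnf :=
  match a with
  | [::] => [::]
  | 0 :: b => b
  | e.+1 :: b => nseq m e ++ b
  end.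

Definition fin_set (X : seq nat) : bool := sorted ltn X.
Definition minX (X : seq nat) : nat := head 0 X.
Definition maxX (X : seq nat) : nat := last 0 X.

Definition large (a : cnf) (X : seq nat) : bool :=
  foldl fund a X == cnf_zero.

Definition interval_co (x y : nat) : seq nat := iota x (y - x).

Definition sparse (a : cnf) (X : seq nat) : bool :=
  (3 < minX X) &&
  all (fun x => all (fun y => (x < y) ==> large a (interval_co x y)) X) X.

Definition grouping (a b : cnf) (X : seq nat) (P : nat -> nat -> nat)
    (F : seq (seq nat)) : Prop :=
  [/\ (forall i, i < size F ->
         [/\ fin_set (nth [::] F i), {subset nth [::] F i <= X} &
             large a (nth [::] F i)]),
      (forall i j, i < j -> j < size F ->
         maxX (nth [::] F i) < minX (nth [::] F j)),
      large b (map maxX F) &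
      (forall i j, i < j -> j < size F ->
         forall x x' y y', x \in nth [::] F i -> x' \in nth [::] F i ->
           y \in nth [::] F j -> y' \in nth [::] F j -> P x y = P x' y')].

Definition admits_grouping (a b : cnf) (k : nat) (X : seq nat) : Prop :=
  forall P : nat -> nat -> nat,
    (forall x y, x \in X -> y \in X -> x < y -> P x y < k) ->
    exists F : seq (seq nat), grouping a b X P F.

(* Main.v *)
Require Import Defs.
From mathcomp Require Import all_boot.
From mathcomp Require Import zify.
Set Implicit Arguments. Unset Strict Implicit. Unset Printing Implicit Defensive.

Lemma foldl_fund0 s : foldl fund [::] s = [::].
Proof. by elim: s. Qed.

Lemma large_nil_l s : large [::] s.
Proof. by rewrite /large foldl_fund0. Qed.

Lemma large_s_nil a : large a [::] = (a == [::]).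
Proof. by []. Qed.

Lemma large_cons a x s : large a (x :: s) = large (fund a x) s.
Proof. by []. Qed.

Lemma large_catr a s t : large a s -> large a (s ++ t).
Proof. by rewrite /large foldl_cat => /eqP ->; rewrite foldl_fund0. Qed.

Lemma fund_cat a b m : a != [::] -> fund (a ++ b) m = fund a m ++ b.
Proof. by case: a => [|[|e] a] //= _; rewrite catA. Qed.

Lemma fund_cons e t m : fund (e :: t) m = fund [:: e] m ++ t.
Proof. by rewrite -fund_cat. Qed.

Lemma large_split a b s : large (a ++ b) s ->
  exists s1 s2, [/\ s = s1 ++ s2, large a s1 & large b s2].
Proof.
elim: s a => [|x s IH] a.
  case: a => [|e a] //= H; by exists [::], [::].
case: (altP (a =P [::])) => [-> |na] H.
  by exists [::], (x :: s).
rewrite large_cons fund_cat // in H.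
have [s1 [s2 [E H1 H2]]] := IH _ H.
by exists (x :: s1), s2; rewrite E.
Qed.

Definition FEP (s : seq nat) := forall a x, path ltn x s -> large a s -> large a (x :: s).

Section FEsec.
Variable N : nat.
Hypothesis IH : forall s, size s <= N -> FEP s.

Lemma FE_multi u v b : sorted ltn (u ++ v) -> size (u ++ v) <= N ->
  large b v -> large b (u ++ v).
Proof.
elim: u => [|y u IHu] //= Hs Hz Hb.
apply: IH; first by lia.
  by [].
apply: IHu => //; [exact: path_sorted Hs | lia].
Qed.

Lemma D_lem p g Z : sorted ltn Z -> size Z <= N -> large (p ++ g) Z -> large g Z.
Proof.
move=> Hs Hz /large_split [Z1 [Z2 [E _ H2]]]; subst Z.
exact: FE_multi.
Qed.

Lemma combine_lem a b s1 s2 : sorted ltn (s1 ++ s2) -> size (s1 ++ s2) <= N ->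
  large a s1 -> large b s2 -> large (a ++ b) (s1 ++ s2).
Proof.
elim: s1 a => [|y s1 IHs] a /= Hs Hz Ha Hb.
  by move: Ha; rewrite large_s_nil => /eqP ->.
case: (altP (a =P [::])) => [-> |na].
  by apply: (FE_multi (u := y :: s1)).
rewrite large_cons fund_cat //; apply: IHs => //; [exact: path_sorted Hs | lia].
Qed.

Lemma FE_step s : size s <= N.+1 -> FEP s.
Proof.
case: s => [|w W] Hz a x Hp Ha.
  by move: Ha; rewrite large_s_nil => /eqP ->; apply: large_nil_l.
have HzW : size W <= N by move: Hz => /=; lia.
move: Hp => /= /andP [xw HpW].
rewrite large_cons in Ha.
rewrite large_cons.
case: a Ha => [|[|e] g] Ha.
- by rewrite large_cons.
- by rewrite /= large_cons; apply: IH.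
- rewrite /= in Ha *.
  case: x xw => [|x'] xw.
  + rewrite /= large_cons; apply: IH => //.
    apply: (D_lem (p := nseq w e)) => //; exact: path_sorted HpW.
  + rewrite large_cons [nseq x'.+1 e]/= fund_cons.
    clear Hz; case: w xw Ha HpW => [|w'] // xw Ha HpW.
    rewrite /= in Ha.
    have := large_split (a := [:: e]) Ha => -[W1 [W2 [E H1 H2]]]; subst W.
    move: HpW; rewrite cat_path => /andP [Hp1 Hp2].
    have Hs12 : sorted ltn (W1 ++ W2) by apply: (path_sorted (x := w'.+1)); rewrite cat_path Hp1.
    have Hs2 : sorted ltn W2 by apply: path_sorted Hp2.
    apply: combine_lem => //.
      by have := IH (s := W1); apply => //; move: HzW; rewrite size_cat; lia.

    have E : nseq w' e = nseq (w' - x') e ++ nseq x' e by rewrite -nseqD; congr nseq; lia.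
    rewrite E -catA in H2.
    apply: (D_lem (p := nseq (w' - x') e)) => //.
    by move: HzW; rewrite size_cat; lia.
Qed.
End FEsec.

Lemma FE s : FEP s.
Proof.
have: forall N s, size s <= N -> FEP s.
  elim=> [|N IHN] t Ht.
    apply: (FE_step (N := 0)); last by lia.
    case=> // _ a x _.
    by rewrite large_s_nil => /eqP ->; apply: large_nil_l.
  by apply: FE_step Ht => u Hu; exact: IHN.
by move=> H; exact: (H (size s)).
Qed.

Lemma FEm u v b : sorted ltn (u ++ v) -> large b v -> large b (u ++ v).
Proof. move=> Hs; apply: (FE_multi (N := size (u ++ v))) => // s _; exact: FE. Qed.

Lemma Dl p g Z : sorted ltn Z -> large (p ++ g) Z -> large g Z.
Proof. move=> Hs; apply: (D_lem (N := size Z)) => // s _; exact: FE. Qed.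

Lemma combine a b s1 s2 : sorted ltn (s1 ++ s2) ->
  large a s1 -> large b s2 -> large (a ++ b) (s1 ++ s2).
Proof. move=> Hs; apply: (combine_lem (N := size (s1 ++ s2))) => // s _; exact: FE. Qed.

Lemma large_trunc k k' e s : k <= k' -> large (nseq k' e) s -> large (nseq k e) s.
Proof.
move=> H; rewrite (_ : k' = k + (k' - k)); last by lia.
rewrite nseqD => /large_split [s1 [s2 [-> H1 _]]]; exact: large_catr.
Qed.

Lemma EM1 e x s : path ltn x s -> large [:: e.+1] s -> large [:: e] s.
Proof.
case: s => [|w s] //= /andP [xw Hp].
rewrite large_cons /= cats0.
case: w xw Hp => [|w] // _ Hp.
rewrite /= => /(large_split (a := [:: e])) [s1 [s2 [E H1 _]]].
apply: FE => //; rewrite E; exact: large_catr.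
Qed.

Lemma EM e e' x s : e <= e' -> path ltn x s -> large [:: e'] s -> large [:: e] s.
Proof.
move=> H Hp; elim: e' H => [|e' IH] H.
  by have ->: e = 0 by lia.
case: (ltngtP e e'.+1) H => // [lt _ | -> //] Hl.
apply: IH; first by lia.
exact: EM1 Hp Hl.
Qed.

Lemma dom L S x s : path ltn x s -> size L <= size S ->
  (forall i, i < size L -> nth 0 L i <= nth 0 S i) -> large S s -> large L s.
Proof.
elim: L S x s => [|l L IH] S x s Hp Hsz Hn HS; first exact: large_nil_l.
case: S Hsz Hn HS => [|t S] //= Hsz Hn HS.
have := large_split (a := [:: t]) HS => -[s1 [s2 [E H1 H2]]]; subst s.
move: (Hp); rewrite cat_path => /andP [Hp1 Hp2].
apply: (combine (a := [:: l])).
- exact: path_sorted Hp.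
- by apply: (EM (e' := t)) Hp1 H1; have := Hn 0; apply.
- apply: IH Hp2 _ _ H2; first by lia.
  by move=> i Hi; have := Hn i.+1; apply.
Qed.

Definition nsum (a b : seq nat) := sort leq (a ++ b).

Lemma nsum_eq a b L : sorted leq L -> perm_eq L (a ++ b) -> nsum a b = L.
Proof.
move=> HL Hp; apply: (sorted_eq leq_trans anti_leq).
- exact: (sort_sorted leq_total).
- exact: HL.
- by rewrite perm_sort perm_sym.
Qed.

Lemma nsumC a b : nsum a b = nsum b a.
Proof. by apply: nsum_eq; [exact: (sort_sorted leq_total) | rewrite perm_sort perm_catC]. Qed.

Lemma path_nseq l e x g : l <= e -> path leq e g -> path leq l (nseq x e ++ g).
Proof.
move=> le Hp; case: x => [|x] /=; first exact: (@path_le _ leq leq_trans _ _ _ le Hp).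
rewrite le /=; elim: x => [|x IH] //=; by rewrite leqnn.
Qed.

Lemma sorted_nseq_cat e x g : path leq e g -> sorted leq (nseq x e ++ g).
Proof.
case: x => [|x] Hp /=; first exact: path_sorted Hp.
exact: path_nseq.
Qed.

Lemma sorted_fund a x : sorted leq a -> sorted leq (fund a x).
Proof.
case: a => [|[|e] g] //= Hs; first exact: path_sorted Hs.
apply: sorted_nseq_cat; apply: (@path_le _ leq leq_trans _ _ _ (leqnSn e) Hs).
Qed.

Lemma sorted_split_lt k s : sorted leq s ->
  s = [seq e <- s | e < k] ++ [seq e <- s | k <= e].
Proof.
elim: s => [|y s IH] //= Hs.
have Hs' := path_sorted Hs.
case: (ltnP y k) => hy /=.
  by rewrite -IH // (_ : k <= y = false) //; lia.
have Hall := order_path_min leq_trans Hs.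
rewrite (_ : [seq e <- s | e < k] = [::]); last first.
  apply/eqP; rewrite -(negbK (_ == _)) -has_filter; apply/hasPn => z zs.
  by move/allP: Hall => /(_ z zs); lia.
rewrite (_ : [seq e <- s | k <= e] = s) //.
apply/all_filterP; apply/allP => z zs; move/allP: Hall => /(_ z zs); lia.
Qed.

Lemma all_leq_trans k k' s : k <= k' -> all (leq k') s -> all (leq k) s.
Proof. move=> H /allP A; apply/allP => z /A; exact: leq_trans. Qed.

Lemma Lstar a b x W : sorted leq a -> sorted leq b -> a != [::] -> b != [::] ->
  path ltn x W -> large (fund (nsum a b) x) W -> large (nsum (fund a x) b) W.
Proof.
case: a => [|a0 a'] //; case: b => [|b0 b'] // Sa Sb _ _ Hp H.
have Aa := order_path_min leq_trans Sa.
have Ab := order_path_min leq_trans Sb.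
have Sa' := path_sorted Sa; have Sb' := path_sorted Sb.
case: (leqP a0 b0) => hab.
- have E1 : nsum (a0 :: a') (b0 :: b') = a0 :: nsum a' (b0 :: b').
    apply: nsum_eq; last by rewrite perm_cons perm_sort.
    rewrite /= path_min_sorted; first exact: (sort_sorted leq_total).
    rewrite all_sort all_cat Aa /= hab /=; exact: all_leq_trans Ab.
  have E2 : nsum (fund (a0 :: a') x) (b0 :: b') = fund [:: a0] x ++ nsum a' (b0 :: b').
    rewrite fund_cons; apply: nsum_eq; last by rewrite -catA perm_cat2l perm_sort.
    have As : all (leq a0) (nsum a' (b0 :: b')).
      rewrite all_sort all_cat Aa /= hab /=; exact: all_leq_trans Ab.
    case: a0 {Sa Aa hab E1 H} As => [|e] As /=; first exact: (sort_sorted leq_total).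
    rewrite cats0; apply: sorted_nseq_cat.
    rewrite path_min_sorted; first exact: (sort_sorted leq_total).
    exact: all_leq_trans As.
  by rewrite E2; rewrite E1 fund_cons in H.
- case: a0 hab Sa Aa H => [|a1] // hab Sa Aa H.
  have [ms [bh [Hb' Hms Hbh Sms]]] : exists ms bh, [/\ b' = ms ++ bh,
      all (fun e => e < a1.+1) ms, all (leq a1.+1) bh & sorted leq ms].
    exists [seq e <- b' | e < a1.+1], [seq e <- b' | a1.+1 <= e]; split.
    + exact: sorted_split_lt.
    + exact: filter_all.
    + exact: filter_all.
    + exact: sorted_filter leq_trans _ _ Sb'.
  have Pms : path leq b0 ms.
    rewrite path_min_sorted //; move: Ab; rewrite Hb' all_cat => /andP [] //.
  have [M' EM'] : exists M', M' = sort leq (a' ++ bh) by eexists.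
  have AM : all (leq a1.+1) M' by rewrite EM' all_sort all_cat Aa Hbh.
  have SM : sorted leq M' by rewrite EM'; exact: (sort_sorted leq_total).
  have CM : forall q, count q M' = count q a' + count q bh.
    by move=> q; rewrite EM' count_sort count_cat.
  have Hlast : last b0 ms < a1.+1.
    have := mem_last b0 ms; rewrite inE => /orP [/eqP -> // | /(allP Hms) //].
  have E1 : nsum (a1.+1 :: a') (b0 :: b') = b0 :: ms ++ a1.+1 :: M'.
    apply: nsum_eq.
      by rewrite /= cat_path Pms /= path_min_sorted // SM andbT ltnW.
    apply/permP => q; rewrite /= !count_cat /= CM Hb' count_cat; clear; lia.
  have E2 : nsum (fund (a1.+1 :: a') x) (b0 :: b') = b0 :: ms ++ nseq x a1 ++ M'.
    apply: nsum_eq.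
      rewrite /= cat_path Pms /=; apply: path_nseq; first by lia.
      rewrite path_min_sorted //; exact: all_leq_trans AM.
    apply/permP => q; rewrite /= !count_cat /= CM Hb' count_cat; clear; lia.
  rewrite E2; rewrite E1 fund_cons in H.
  have [W1 [V [EW H1 HV]]] := large_split H.
  have [W2 [V' [EV H2 HV']]] := large_split HV.
  have [W3 [W4 [EV' H3 H4]]] := large_split (a := [:: a1.+1]) HV'.
  case: W3 EV' H3 => [|w3 T] // EV' H3.
  subst W V V'.
  rewrite large_cons /= cats0 in H3.
  have Hs : sorted ltn (W1 ++ W2 ++ (w3 :: T) ++ W4) by exact: path_sorted Hp.
  have Hxw : x < w3.
    have /allP := order_path_min ltn_trans Hp; apply.
    by rewrite !mem_cat inE eqxx /= !orbT.
  have H12 : large ms (W1 ++ W2).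
    apply: FEm => //; move: Hs; rewrite catA; by case/cat_sorted2.
  have HT : large (nseq w3 a1) (w3 :: T).
    apply: FE => //; move: Hs => /cat_sorted2 [_] /cat_sorted2 [_] /=.
    by rewrite cat_path => /andP [].
  have Hp' : path ltn x (((W1 ++ W2) ++ w3 :: T) ++ W4) by rewrite -!catA.
  have Hp123 : path ltn x ((W1 ++ W2) ++ w3 :: T) by move: Hp'; rewrite cat_path => /andP [].
  have H123 : large (ms ++ nseq w3 a1) ((W1 ++ W2) ++ w3 :: T).
    by apply: combine => //; exact: path_sorted Hp123.
  have Hdom : large (b0 :: ms ++ nseq x a1) ((W1 ++ W2) ++ w3 :: T).
    apply: (dom (x := x) (S := ms ++ nseq w3 a1)) H123 => //.
      rewrite /= !size_cat !size_nseq; clear -Hxw; lia.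
    move=> i Hi.
    have SS : sorted leq (b0 :: ms ++ nseq w3 a1).
      rewrite /= cat_path Pms /= -[nseq w3 a1]cats0; apply: path_nseq => //.

    have Ew : nseq w3 a1 = nseq x a1 ++ nseq (w3 - x) a1.
      by rewrite -nseqD; congr nseq; clear -Hxw; lia.
    rewrite Ew catA in SS *.
    have -> : nth 0 (b0 :: ms ++ nseq x a1) i = nth 0 (b0 :: (ms ++ nseq x a1) ++ nseq (w3 - x) a1) i.
      by rewrite -[b0 :: (ms ++ nseq x a1) ++ _]cat_cons nth_cat Hi.
    have -> : nth 0 ((ms ++ nseq x a1) ++ nseq (w3 - x) a1) i = nth 0 (b0 :: (ms ++ nseq x a1) ++ nseq (w3 - x) a1) i.+1 by [].
    apply: (sorted_leq_nth leq_trans leqnn 0 SS); rewrite ?inE /= ?size_cat ?size_nseq;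
      move: Hi; rewrite /= ?size_cat ?size_nseq; clear -Hxw; lia.
  rewrite (_ : b0 :: ms ++ nseq x a1 ++ M' = (b0 :: ms ++ nseq x a1) ++ M'); last by rewrite /= catA.
  rewrite (_ : W1 ++ W2 ++ (w3 :: T) ++ W4 = ((W1 ++ W2) ++ w3 :: T) ++ W4); last by rewrite -!catA.
  apply: combine => //; exact: path_sorted Hp'.
Qed.

Lemma NS X : sorted ltn X -> forall a b, sorted leq a -> sorted leq b ->
  large (nsum a b) X -> forall p : pred nat,
  large a (filter p X) \/ large b (filter (predC p) X).
Proof.
elim: X => [|x X IH] HX a b Sa Sb H p.
  left; rewrite /= large_s_nil; move: H; rewrite large_s_nil => /eqP H.
  have := size_sort leq (a ++ b); rewrite -/(nsum a b) H size_cat /=.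
  by case: a Sa {H}.
case: (altP (a =P [::])) => [-> | na]; first by left; exact: large_nil_l.
case: (altP (b =P [::])) => [-> | nb]; first by right; exact: large_nil_l.
have HX' := path_sorted HX.
rewrite large_cons in H.
case px: (p x).
- have H' := Lstar Sa Sb na nb HX H.
  have [L|R] := IH HX' _ _ (sorted_fund x Sa) Sb H' p.
    by left; rewrite /= px large_cons.
  by right; rewrite /= px.
- rewrite nsumC in H.
  have H' := Lstar Sb Sa nb na HX H.
  rewrite nsumC in H'.
  have [L|R] := IH HX' _ _ Sa (sorted_fund x Sb) H' p.
    by left; rewrite /= px.
  by right; rewrite /= px /= large_cons.
Qed.

Lemma sorted_nseq k e : sorted leq (nseq k e).
Proof. by rewrite -[nseq k e]cats0; apply: sorted_nseq_cat. Qed.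

Lemma nsum_nseq k1 k2 e : nsum (nseq k1 e) (nseq k2 e) = nseq (k1 + k2) e.
Proof. by rewrite /nsum -nseqD sorted_sort //; [exact: leq_trans | exact: sorted_nseq]. Qed.

Lemma T1 (T : eqType) (cs : seq T) (col : nat -> T) t b X : cs != [::] ->
  sorted ltn X -> (forall x, x \in X -> col x \in cs) ->
  large (nseq (size cs * t) b) X ->
  exists2 c, c \in cs & large (nseq t b) (filter (fun x => col x == c) X).
Proof.
case: t => [|t]; first by case: cs => // c cs _ _ _ _; exists c; [rewrite inE eqxx | exact: large_nil_l].
elim: cs X => [|c cs IH] X // _ HX Hc H.
case: (altP (cs =P [::])) => [Ecs | necs].
  subst cs; exists c; first by rewrite inE eqxx.
  rewrite (_ : filter _ X = X); first by move: H; rewrite [size _]/= mul1n.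
  apply/all_filterP/allP => x /Hc; by rewrite inE.
rewrite [size (c :: cs)]/= mulSn -nsum_nseq in H.
have [L|R] := NS HX (sorted_nseq _ _) (sorted_nseq _ _) H (fun x => col x == c).
  by exists c => //; rewrite inE eqxx.
have HZ : sorted ltn (filter (predC (fun x => col x == c)) X) by exact: sorted_filter ltn_trans _ _ HX.
have HcZ : forall x, x \in filter (predC (fun x => col x == c)) X -> col x \in cs.
  move=> x; rewrite mem_filter /= => /andP [ne xin].
  by have := Hc x xin; rewrite inE (negbTE ne).
have [c' c'in Hc'] := IH _ necs HZ HcZ R.
exists c'; first by rewrite inE c'in orbT.
case: (eqVneq c' c) => [E|ne].
  subst c'; move: Hc'; rewrite -filter_predI.
  rewrite (_ : [seq x <- X | predI _ _ x] = [::]); first by rewrite large_s_nil.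
  apply/eqP; rewrite -(negbK (_ == _)) -has_filter; apply/hasPn => z _ /=.
  by rewrite andbN.
move: Hc'; rewrite -filter_predI; congr large; apply: eq_filter => z /=.
by case: (eqVneq (col z) c') => // ->; rewrite ne.
Qed.

Lemma foldl_nseq0 k t : foldl fund (nseq k 0) t = nseq (k - size t) 0.
Proof.
elim: t k => [|y t IH] k /=; first by rewrite subn0.
case: k => [|k] /=; first by rewrite foldl_fund0.
by rewrite IH subSS.
Qed.

Lemma large_nseq0 k t : large (nseq k 0) t = (k <= size t).
Proof.
rewrite /large foldl_nseq0; apply/eqP/idP => [|H].
  by case E: (k - size t) => //; lia.
by rewrite (_ : k - size t = 0) //; lia.
Qed.

Lemma iota_split a b s L : large (a ++ b) (iota s L) ->
  exists L1, [/\ L1 <= L, large a (iota s L1) & large b (iota (s + L1) (L - L1))].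
Proof.
move=> /large_split [s1 [s2 [E H1 H2]]].
exists (size s1).
have Hz : size s1 <= L by rewrite -(size_iota s L) E size_cat leq_addr.
split => //.
  have := f_equal (take (size s1)) E; rewrite take_size_cat // take_iota => E1.
  by rewrite (_ : minn (size s1) L = size s1) in E1; [rewrite E1 | lia].
have := f_equal (drop (size s1)) E; rewrite drop_size_cat // drop_iota => E2.
by rewrite E2.
Qed.

Lemma E1n k s L : large (nseq k 1) (iota s L) -> 2 ^ k * s <= s + L.
Proof.
elim: k s L => [|k IH] s L H; first by rewrite expn0 mul1n leq_addr.
move: H; rewrite [nseq _ _]/= -cat1s => /iota_split [L1 [HL H1 H2]].
have := IH _ _ H2.
case: L1 HL H1 H2 => [|L1] // HL H1 H2.
move: H1; rewrite [iota s _]/= large_cons /= cats0 large_nseq0 size_iota => HL1 Hk.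
have : 2 ^ k * (s + L1.+1) <= s + L by apply: leq_trans Hk _; clear -HL; lia.
rewrite expnS; clear -HL1; nia.
Qed.

Lemma E2 s L : large [:: 2] (iota s L) -> 2 ^ s * s.+1 <= s + L.
Proof.
case: L => [|L] //; rewrite /= large_cons /= cats0 => H.
have := E1n H; clear; lia.
Qed.

Lemma pow_bound p : p * p.+1 <= 2 ^ p.+1.
Proof.
elim: p => [|p IH] //.
have := ltn_expl p (isT : 1 < 2).
rewrite !expnS in IH *; move: (2 ^ p) IH => X; clear; nia.
Qed.

Lemma E3 p L : 2 <= p -> large [:: 3] (iota p L) -> p ^ p.+1 <= p + L.
Proof.
case: L => [|L] // hp; rewrite /= large_cons /= cats0.
case: p hp => [|[|p]] // _.
rewrite /= -cat1s => /iota_split [L1 [HL H1]].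
rewrite -cat1s => /iota_split [L2 [HL2 H2 _]].
have B1 := E2 H1; have B2 := E2 H2.
set q := p.+2 in B1 B2 *.
set s1 := q.+1 in B1 B2 *.
set s2 := s1 + L1 in B2 *.
have Hs2 : 2 ^ s1 <= s2 by apply: leq_trans B1; rewrite leq_pmulr.
have Hq : q ^ q.+1 <= 2 ^ (q * q.+1).
  rewrite expnM leq_exp2r //; exact: ltnW (ltn_expl _ _).
apply: leq_trans Hq _.
apply: leq_trans (_ : 2 ^ s2 <= _).
  by apply: leq_pexp2l => //; apply: leq_trans (pow_bound q) Hs2.
apply: leq_trans (_ : 2 ^ s2 * s2.+1 <= _); first by rewrite leq_pmulr.
apply: leq_trans B2 _; rewrite /s2 /s1; clear -HL HL2; lia.
Qed.

Fixpoint allseqs (L m : nat) : seq (seq nat) :=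
  if L is L'.+1 then [seq i :: s | i <- iota 0 m, s <- allseqs L' m] else [:: [::]].

Lemma size_allseqs L m : size (allseqs L m) = m ^ L.
Proof. by elim: L => [|L IH] //=; rewrite size_allpairs size_iota IH expnS. Qed.

Lemma mem_allseqs L m s : size s = L -> all (fun i => i < m) s -> s \in allseqs L m.
Proof.
elim: L s => [|L IH] [|i s] //= [Hs] /andP [Hi Ha].
apply: (allpairs_f (fun i s => i :: s)); first by rewrite mem_iota.
exact: IH.
Qed.

Lemma sorted_cat_lt s t x y : sorted ltn (s ++ t) -> x \in s -> y \in t -> x < y.
Proof.
elim: s => [|a s IH] //= Hs; rewrite inE => /orP [/eqP -> | xs] yt.
  by have /allP := order_path_min ltn_trans Hs; apply; rewrite mem_cat yt orbT.
exact: IH (path_sorted Hs) xs yt.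
Qed.

Lemma path_last_size x s : path ltn x s -> x + size s <= last x s.
Proof.
elim: s x => [|y s IH] x /=; first by rewrite addn0.
move=> /andP [xy Hp]; have := IH _ Hp; clear -xy; lia.
Qed.

Lemma shrink_list (Hs : seq (seq nat)) (Q : seq nat -> seq nat -> Prop) :
  (forall i, i < size Hs -> exists H', Q (nth [::] Hs i) H') ->
  exists Hs', size Hs' = size Hs /\ forall i, i < size Hs -> Q (nth [::] Hs i) (nth [::] Hs' i).
Proof.
elim: Hs => [|H Hs IH] Hq; first by exists [::].
have [H' HQ] := Hq 0 isT.
have [Hs' [Hsz HQs]] : exists Hs', size Hs' = size Hs /\
    forall i, i < size Hs -> Q (nth [::] Hs i) (nth [::] Hs' i).
  by apply: IH => i Hi; exact: (Hq i.+1).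
by exists (H' :: Hs'); split => [|[|i] Hi] //=; [rewrite Hsz | exact: HQs].
Qed.

Section Main.
Variables (n c m : nat) (X' : seq nat) (P : nat -> nat -> nat).
Hypotheses (HX : sorted ltn (m :: X')) (Hm : 4 <= m) (Hc : c <= m)
  (Hsp : forall x y, x \in m :: X' -> y \in m :: X' -> x < y -> large [:: 3] (iota x (y - x)))
  (HP : forall x y, x \in m :: X' -> y \in m :: X' -> x < y -> P x y < m).

Definition blockok j (pre : seq nat) (H : seq nat) :=
  [/\ sorted ltn H, {subset H <= m :: pre} & large (nseq (m ^ (c - j)) n) H].

Definition inv j := exists pre R Hs, [/\ X' = pre ++ R, size Hs = j,
  large (nseq (m - j) n.+2) R,
  forall i, i < j -> blockok j pre (nth [::] Hs i) &
  forall i i', i < i' -> i' < j -> exists col, forall x y,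
     x \in nth [::] Hs i -> y \in nth [::] Hs i' -> x < y /\ P x y = col].

Lemma inv0 : large [:: n.+3] (m :: X') -> inv 0.
Proof.
move=> H; exists [::], X', [::]; split => //.
by move: H; rewrite large_cons /= cats0 subn0.
Qed.

Lemma inv_step j : j < c -> inv j -> inv j.+1.
Proof.
move=> hj [pre [R [Hs [EX Hsz HR Hblk Hpair]]]].
have Emj : m - j = (m - j.+1).+1 by clear -hj Hc; lia.
rewrite Emj [nseq _.+1 _]/= -cat1s in HR.
have [Z [R' [ER HZ HR']]] := large_split HR.
case: Z ER HZ => [|z Z'] // ER HZ.
rewrite large_cons /= cats0 in HZ.
have HX2 : sorted ltn ((m :: pre) ++ (z :: Z' ++ R')) by move: HX; rewrite EX ER => H; exact: H.
have Hpath : path ltn m (pre ++ z :: Z' ++ R') by exact: HX2.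
set p := last m pre.
have Hpz : p < z by move: Hpath; rewrite cat_path => /andP [_] /= /andP [].
have inX : forall y, y \in (m :: pre) ++ (z :: Z' ++ R') -> y \in m :: X'.
  by move=> y; rewrite EX ER cat_cons.
have pX : p \in m :: X' by apply: inX; rewrite mem_cat mem_last.
have zX : z \in m :: X' by apply: inX; rewrite mem_cat mem_head orbT.
have Hp1 : path ltn m pre by move: Hpath; rewrite cat_path => /andP [].
have mp : m <= p by have := path_last_size Hp1; rewrite -/p; clear; lia.
have szpre : size (m :: pre) <= p.+1 by have := path_last_size Hp1; rewrite -/p /=; clear; lia.
have Bpz : p ^ p.+1 <= z.
  have h2 : 2 <= p by clear -mp Hm; lia.
  by have := E3 h2 (Hsp pX zX Hpz); rewrite subnKC // ltnW.
have Bm : forall e, e <= p.+1 -> m ^ e <= z.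
  move=> e he; apply: leq_trans Bpz.
  apply: leq_trans (_ : m ^ p.+1 <= _); first by apply: leq_pexp2l => //; clear -Hm; lia.
  by rewrite leq_exp2r.
have HsZ : sorted ltn (z :: Z') by move: HX2 => /cat_sorted2 [_] /=; rewrite cat_path => /andP [].
have HsZ' : sorted ltn Z' := path_sorted HsZ.
have ltpre : forall h y, h \in m :: pre -> y \in Z' -> h < y.
  move=> h y hin yin; apply: (sorted_cat_lt HX2 hin).
  by rewrite in_cons mem_cat yin orbT.
have inZ' : forall y, y \in Z' -> y \in m :: X'.
  by move=> y yin; apply: inX; rewrite mem_cat; apply/orP; right; rewrite in_cons mem_cat yin orbT.
have inpre : forall h, h \in m :: pre -> h \in m :: X'.
  by move=> h hin; apply: inX; rewrite mem_cat hin.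
pose sig y := [seq P h y | h <- m :: pre].
pose cs := allseqs (size (m :: pre)) m.
have Hcs0 : cs != [::].
  apply/eqP => E; have := size_allseqs (size (m :: pre)) m; rewrite -/cs E /=.
  by move/esym/eqP; rewrite expn_eq0; clear -Hm; case: m Hm.
have Hcol : forall y, y \in Z' -> sig y \in cs.
  move=> y yin; apply: mem_allseqs; first by rewrite size_map.
  apply/allP => q /mapP [h hin ->]; apply: HP; [exact: inpre | exact: inZ' | exact: ltpre].
have HZ1 : large (nseq (size cs * 1) n.+1) Z'.
  apply: large_trunc HZ; rewrite muln1 size_allseqs; exact: Bm.
have [s sin HC] := T1 Hcs0 HsZ' Hcol HZ1.
have HsC : sorted ltn [seq y <- Z' | sig y == s] by exact: sorted_filter ltn_trans _ _ HsZ'.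
have inC : forall y, y \in [seq y <- Z' | sig y == s] -> y \in Z' /\ sig y = s.
  by move=> y; rewrite mem_filter => /andP [/eqP -> ->].
case EC: [seq y <- Z' | sig y == s] HC HsC inC => [|c0 C'] // HC HsC inC.
rewrite /= large_cons /= cats0 in HC.
have [c0Z' sc0] := inC c0 (mem_head _ _).
have zc0 : z < c0 by have /allP := order_path_min ltn_trans HsZ; apply.
have HC' : large (nseq (m ^ (c - j.+1)) n) C'.
  apply: large_trunc HC; apply: leq_trans (ltnW zc0); apply: Bm; clear -Hc mp; lia.
have Hsame : forall h y, h \in m :: pre -> y \in c0 :: C' -> P h y = P h c0.
  move=> h y hin yin; have [_ sy] := inC y yin.
  have : sig y = sig c0 by rewrite sy sc0.
  by move/eq_in_map => /(_ h hin).
pose Q H H' := exists2 col, H' = filter (fun h => P h c0 == col) H &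
                  large (nseq (m ^ (c - j.+1)) n) H'.
have c0X : c0 \in m :: X' by exact: inZ'.
have Hex : forall i, i < size Hs -> exists H', Q (nth [::] Hs i) H'.
  move=> i Hi; rewrite Hsz in Hi; have [HsH HsubH HlH] := Hblk i Hi.
  have Eexp : m ^ (c - j) = size (iota 0 m) * m ^ (c - j.+1).
    by rewrite size_iota -expnS; congr expn; clear -hj; lia.
  rewrite Eexp in HlH.
  have Hi0 : iota 0 m != [::] by case: m Hm.
  have Hcolh : forall h, h \in nth [::] Hs i -> P h c0 \in iota 0 m.
    move=> h /HsubH hin; rewrite mem_iota /=; apply: HP; [exact: inpre | exact: c0X | exact: ltpre].
  have [col colin Hcl] := T1 Hi0 HsH Hcolh HlH.
  by exists [seq h <- nth [::] Hs i | P h c0 == col]; exists col.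
have [Hs' [Hsz' HQ]] := shrink_list Hex.
exists (pre ++ z :: Z'), R', (rcons Hs' C'); split.
- by rewrite EX ER -catA.
- by rewrite size_rcons Hsz' Hsz.
- exact: HR'.
- move=> i Hi; rewrite nth_rcons Hsz' Hsz.
  case: (ltnP i j) => [lij | gij].
    have [col -> Hl] := HQ i ltac:(by rewrite Hsz).
    have [HsH HsubH _] := Hblk i lij.
    split => //; first exact: sorted_filter ltn_trans _ _ HsH.
    move=> x; rewrite mem_filter => /andP [_ /HsubH].
    by rewrite -cat_cons mem_cat => ->.
  rewrite (_ : i == j) //; last by apply/eqP; clear -Hi gij; lia.
  split => //; first by move: HsC => /path_sorted.
  move=> y yC; have [yZ _] := inC y ltac:(by rewrite inE yC orbT).
  by rewrite -cat_cons mem_cat; apply/orP; right; rewrite in_cons yZ orbT.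
- move=> i i' lii' Hi'.
  rewrite !nth_rcons Hsz' Hsz.
  have lij : i < j by clear -lii' Hi'; lia.
  rewrite lij.
  have [col Ecol Hl] := HQ i ltac:(by rewrite Hsz).
  case: (ltnP i' j) => [li'j | gi'j].
    have [col' Hc'] := Hpair i i' lii' li'j.
    have [col2 Ecol2 _] := HQ i' ltac:(by rewrite Hsz).
    exists col' => x y; rewrite Ecol Ecol2 !mem_filter => /andP [_ xin] /andP [_ yin].
    exact: Hc'.
  rewrite (_ : i' == j); last by apply/eqP; clear -Hi' gi'j; lia.
  have [_ HsubH _] := Hblk i lij.
  exists col => x y; rewrite Ecol mem_filter => /andP [/eqP Px /HsubH xin] yC.
  have yC0 : y \in c0 :: C' by rewrite inE yC orbT.
  have [yZ _] := inC y yC0.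
  by split; [exact: ltpre | rewrite Hsame].
Qed.

Lemma inv_all j : large [:: n.+3] (m :: X') -> j <= c -> inv j.
Proof.
move=> HL; elim: j => [|j IH] hj; first exact: inv0.
by apply: inv_step => //; apply: IH; exact: ltnW.
Qed.

Lemma main_sec : large [:: n.+3] (m :: X') ->
  exists F, grouping (omega_pow n) (nat_cnf c) (m :: X') P F.
Proof.
move=> HL; have [pre [R [Hs [EX Hsz _ Hblk Hpair]]]] := inv_all HL (leqnn c).
have Hne : forall i, i < size Hs -> exists h t, nth [::] Hs i = h :: t.
  move=> i Hi; rewrite Hsz in Hi; have [_ _ Hl] := Hblk i Hi.
  by move: Hl; rewrite subnn expn0; case: (nth [::] Hs i) => [|h t] // _; exists h, t.
exists Hs; split.
- move=> i Hi; rewrite Hsz in Hi; have [HsH HsubH HlH] := Hblk i Hi.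
  split => //.
    by move=> x /HsubH; rewrite EX -cat_cons mem_cat => ->.
  by move: HlH; rewrite subnn expn0.
- move=> i j lij Hj.
  have [col Hcl] := Hpair i j lij ltac:(by rewrite -Hsz).
  have [h [t Eh]] := Hne i (ltn_trans lij Hj).
  have [h' [t' Eh']] := Hne j Hj.
  rewrite /maxX /minX Eh Eh' /=.
  have [] := Hcl (last h t) h'; rewrite ?Eh ?Eh' ?mem_last ?mem_head //.
- by rewrite /nat_cnf large_nseq0 size_map Hsz.
- move=> i j lij Hj x x' y y' xin x'in yin y'in.
  have [col Hcl] := Hpair i j lij ltac:(by rewrite -Hsz).
  by have [_ ->] := Hcl x y xin yin; have [_ ->] := Hcl x' y' x'in y'in.
Qed.
End Main.

Theorem mainTheorem18 (n c : nat) (X : seq nat) :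
  fin_set X ->
  large (omega_pow n.+3) X ->
  sparse (omega_pow 3) X ->
  c <= minX X ->
  admits_grouping (omega_pow n) (nat_cnf c) (minX X) X.
Proof.
case: X => [|m X'] // HX HL /andP [Hm Hall] Hc P HP.
apply: (main_sec (n := n) (c := c) (m := m) (X' := X')) => //.
move=> x y xin yin lxy.
by have := allP (allP Hall x xin) y yin; rewrite lxy.
Qed.
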